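(* Let $\Pi_n=\{\pi_1,\ldots,\pi_n\}$ be a finite set of policies of a discrete mean-field game (setting in the context) with $J$ $\mu$-diff-affine. Then the restricted game on $\Pi_n$ admits a Nash equilibrium $\nu\in\Delta(\Pi_n)$ (i.e. $J(\pi_k,\mu(\nu))\le J(\pi(\nu),\mu(\nu))$ for all $k$), a correlated equilibrium and a coarse correlated equilibrium.
   Context: A discrete mean-field game consists of finite state set $\mathcal X$, finite action set $\mathcal A$, reward $r:\mathcal X\times\mathcal A\times\Delta(\mathcal X)\to\mathbb R$, transitions $p(x'\mid x,a)$ independent of the population distribution, initial distribution $\mu_0$. A policy is $\pi:\mathcal X\to\Delta(\mathcal A)$; $\mu^\pi$ is its state occupancy measure; $J(\pi,\mu)=\sum_{x,a}\mu^\pi(x)\pi(x,a)r(x,a,\mu)$. For $\nu\in\Delta(\Pi_n)$, $\mu(\nu)=\sum_j\nu(\pi_j)\mu^{\pi_j}$ and $J(\pi(\nu),\mu)=\sum_i\nu(\pi_i)J(\pi_i,\mu)$. $J$ is $\mu$-diff-affine if for all policies $\pi,\pi'$ the map $\mu\mapsto J(\pi,\mu)-J(\pi',\mu)$ is affine. A restricted coarse correlated equilibrium is a finitely supported distribution $\rho$ over $\Delta(\Pi_n)$ with $\mathbb E_{\nu\sim\rho}[J(\pi_k,\mu(\nu))-J(\pi(\nu),\mu(\nu))]\le0$ for all $k$; a restricted correlated equilibrium is such a $\rho$ with $\sum_\nu\rho(\nu)\nu(\pi_i)\big(J(\pi_k,\mu(\nu))-J(\pi_i,\mu(\nu))\big)\le0$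 for all $i,k$. *)

(* Defs.v *)
From HB Require Import structures.
From mathcomp Require Import all_boot all_order all_algebra.
From mathcomp Require Import reals.
Set Implicit Arguments. Unset Strict Implicit. Unset Printing Implicit Defensive.
Import Order.TTheory GRing.Theory Num.Theory.
Local Open Scope ring_scope.

Section MFG.
Variable R : realType.

Definition is_dist (T : finType) (m : {ffun T -> R}) : Prop :=
  (forall x, 0 <= m x) /\ \sum_x m x = 1.

Variables (X A : finType).

Definition policy := {ffun X -> {ffun A -> R}}.
Definition is_policy (pi : policy) : Prop := forall x, is_dist (pi x).

(* occ : pi |-> mu^pi (state occupancy measure), r : reward r(x,a,mu) *)
Variable occ : policy -> {ffun X -> R}.
Variable r : X -> A -> {ffun X -> R} -> R.

Definition J (pi : policy) (mu : {ffun X -> R}) : R :=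
  \sum_x \sum_a occ pi x * pi x a * r x a mu.

Definition mu_diff_affine : Prop :=
  forall pi pi' : policy, is_policy pi -> is_policy pi' ->
  forall (mu1 mu2 : {ffun X -> R}) (t : R),
    is_dist mu1 -> is_dist mu2 -> 0 <= t <= 1 ->
    let mu := [ffun x => t * mu1 x + (1 - t) * mu2 x] in
    J pi mu - J pi' mu
    = t * (J pi mu1 - J pi' mu1) + (1 - t) * (J pi mu2 - J pi' mu2).

Variables (n : nat) (pol : 'I_n -> policy).

Definition mu_of (nu : {ffun 'I_n -> R}) : {ffun X -> R} :=
  [ffun x => \sum_j nu j * occ (pol j) x].

(* J(pi(nu), mu) = sum_i nu(pi_i) J(pi_i, mu) *)
Definition J_mix (nu : {ffun 'I_n -> R}) (mu : {ffun X -> R}) : R :=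
  \sum_i nu i * J (pol i) mu.

Definition restricted_nash (nu : {ffun 'I_n -> R}) : Prop :=
  is_dist nu /\ forall k, J (pol k) (mu_of nu) <= J_mix nu (mu_of nu).

(* A finitely supported distribution rho over Delta(Pi_n), given as a finite
   list of (weight, nu) pairs: weights nonnegative summing to 1, each nu in
   Delta(Pi_n); rho(nu) is the total weight of the entries equal to nu. *)
Definition fs_dist (rho : seq (R * {ffun 'I_n -> R})) : Prop :=
  (forall p, p \in rho -> 0 <= p.1 /\ is_dist p.2) /\
  \sum_(p <- rho) p.1 = 1.

Definition restricted_cce (rho : seq (R * {ffun 'I_n -> R})) : Prop :=
  fs_dist rho /\
  forall k, \sum_(p <- rho)
    p.1 * (J (pol k) (mu_of p.2) - J_mix p.2 (mu_of p.2)) <= 0.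

Definition restricted_ce (rho : seq (R * {ffun 'I_n -> R})) : Prop :=
  fs_dist rho /\
  forall i k, \sum_(p <- rho)
    p.1 * p.2 i * (J (pol k) (mu_of p.2) - J (pol i) (mu_of p.2)) <= 0.

End MFG.

(* Main.v *)
Require Import Defs.
From HB Require Import structures.
From mathcomp Require Import all_boot all_order all_algebra.
From mathcomp Require Import reals.
From mathcomp Require Import boolp.
From mathcomp Require Import ring lra zify.
Set Implicit Arguments. Unset Strict Implicit. Unset Printing Implicit Defensive.
Import Order.TTheory GRing.Theory Num.Theory.
Local Open Scope ring_scope.

Section Lex.
Variable R : realFieldType.
Variable p : nat.
Implicit Types u v : 'rV[R]_p.

Definition lexnn u : Prop :=
  forall k : 'I_p, (forall j : 'I_p, (j < k)%N -> u 0 j = 0) -> 0 <= u 0 k.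

Lemma lex_aux u v (k : nat) : lexnn u -> lexnn v ->
  (forall j : 'I_p, (j < k)%N -> u 0 j + v 0 j = 0) ->
  forall j : 'I_p, (j < k)%N -> u 0 j = 0 /\ v 0 j = 0.
Proof.
move=> hu hv hs.
suff H : forall n (j : 'I_p), (j < n)%N -> (j < k)%N -> u 0 j = 0 /\ v 0 j = 0.
  by move=> j jk; apply: (H j.+1).
elim=> [|n IH] j //; rewrite ltnS leq_eqVlt => /orP [/eqP ej|jn] jk; last exact: IH.
have H0 : forall i : 'I_p, (i < j)%N -> u 0 i = 0 /\ v 0 i = 0.
  by move=> i ij; apply: IH; rewrite -?ej //; apply: ltn_trans jk.
have u0 := hu j (fun i ij => (H0 i ij).1).
have v0 := hv j (fun i ij => (H0 i ij).2).
have := hs j jk => s0.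
split; lra.
Qed.

Lemma lexD u v : lexnn u -> lexnn v -> lexnn (u + v).
Proof.
move=> hu hv k hk.
have hk' : forall j : 'I_p, (j < k)%N -> u 0 j + v 0 j = 0.
  by move=> j jk; have := hk j jk; rewrite mxE.
have H := lex_aux hu hv hk'.
rewrite mxE addr_ge0 //; [apply: hu | apply: hv] => j jk; by case: (H j jk).
Qed.

Lemma lexZ a u : 0 <= a -> lexnn u -> lexnn (a *: u).
Proof.
move=> ha hu k hk; rewrite mxE.
have [->|a0] := eqVneq a 0; first by rewrite mul0r.
rewrite mulr_ge0 //; apply: hu => j jk.
by have := hk j jk; rewrite mxE => /eqP; rewrite mulf_eq0 (negbTE a0) => /eqP.
Qed.

Lemma lex_anti u : lexnn u -> lexnn (- u) -> u = 0.
Proof.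
move=> hu hv.
have H := @lex_aux u (- u) p hu hv.
apply/rowP => j; rewrite mxE; apply: (H _ j (ltn_ord j)).1.
by move=> i _; rewrite mxE addrN.
Qed.

Lemma lex0 : lexnn 0.
Proof. by move=> k _; rewrite mxE. Qed.

Lemma lex_first u (k0 : 'I_p) : nat_of_ord k0 = 0%N -> 0 < u 0 k0 -> lexnn u.
Proof.
move=> e0 hp k hk; case: (posnP k) => [kz|kp].
  have -> : k = k0 by apply: val_inj; rewrite /= kz e0.
  by apply: ltW.
by have := hk k0; rewrite e0 => /(_ kp) => h; move: hp; rewrite h ltxx.
Qed.

Lemma lex_ge0 u (k0 : 'I_p) : nat_of_ord k0 = 0%N -> lexnn u -> 0 <= u 0 k0.
Proof. by move=> e0 hu; apply: hu => j; rewrite e0. Qed.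

Lemma lex_total u : lexnn u \/ lexnn (- u).
Proof.
suff H : forall n, (forall j : 'I_p, (j < n)%N -> u 0 j = 0) \/
   exists k : 'I_p, [/\ (k < n)%N, forall j : 'I_p, (j < k)%N -> u 0 j = 0 & u 0 k != 0].
  case: (H p) => [h0|[k [_ hk uk]]].
    by left => k _; rewrite h0.
  have gen : forall w : 'rV[R]_p, (forall j : 'I_p, (j < k)%N -> w 0 j = 0) -> 0 < w 0 k -> lexnn w.
    move=> w hw wk k' hk'; case: (ltngtP k' k) => c.
    - by rewrite hw.
    - by move: wk; rewrite (hk' k c) ltxx.
    - have -> : k' = k by apply: val_inj.
      by apply: ltW.
  case: (ltgtP (u 0 k) 0) => c.
  - right; apply: gen; first by move=> j jk; rewrite mxE hk // oppr0.
    by rewrite mxE oppr_gt0.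
  - by left; apply: gen.
  - by move: uk; rewrite c eqxx.
elim=> [|n [h|h]]; first by left.
- have [nlt|nge] := ltnP n p.
    have [z|nz] := eqVneq (u 0 (Ordinal nlt)) 0.
      left => j; rewrite ltnS leq_eqVlt => /orP [/eqP e|]; last exact: h.
      by have -> : j = Ordinal nlt by apply: val_inj.
    by right; exists (Ordinal nlt); split.
  left => j _; apply: h; apply: leq_trans (ltn_ord j) nge.
- by right; case: h => k [kn hk uk]; exists k; split => //; apply: ltnW.
Qed.

Definition lexle u v := lexnn (v - u).

Lemma lexle_trans u v w : lexle u v -> lexle v w -> lexle u w.
Proof. by rewrite /lexle => h1 h2; have := lexD h2 h1; rewrite addrA subrK. Qed.

Lemma lexle_total u v : lexle u v \/ lexle v u.
Proof. by rewrite /lexle; case: (lex_total (v - u)); rewrite ?opprB; auto. Qed.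

Lemma lexle_anti u v : lexle u v -> lexle v u -> u = v.
Proof.
by rewrite /lexle => h1 h2; apply/eqP; rewrite eq_sym -subr_eq0 -opprB oppr_eq0; apply/eqP/lex_anti; rewrite // opprB.
Qed.

Lemma lexle_refl u : lexle u u.
Proof. by rewrite /lexle subrr; exact: lex0. Qed.

Lemma lex_min (T : eqType) (rho : T -> 'rV[R]_p) (s : seq T) : s != [::] ->
  exists2 r, r \in s & forall c, c \in s -> lexle (rho r) (rho c).
Proof.
elim: s => [//|a s IH] _.
have [->|sn] := eqVneq s [::].
  by exists a; rewrite ?mem_head // => c; rewrite inE => /eqP ->; exact: lexle_refl.
have [r rs hr] := IH sn.
case: (lexle_total (rho a) (rho r)) => h.
  exists a; first exact: mem_head.
  move=> c; rewrite inE => /orP [/eqP ->|cs]; first exact: lexle_refl.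
  exact: lexle_trans h (hr c cs).
exists r; first by rewrite inE rs orbT.
by move=> c; rewrite inE => /orP [/eqP ->|cs]; [exact: h| exact: hr].
Qed.

End Lex.

Section ParSec.
Local Close Scope ring_scope.

Lemma sum_double (T : finType) (b : T -> nat) : \sum_x (b x).*2 = (\sum_x b x).*2.
Proof. by rewrite (big_morph double doubleD (id1 := 0%N)). Qed.

Lemma oddsum (T : finType) (a : T -> nat) :
  odd (\sum_x a x) = odd #|[set x | odd (a x)]|.
Proof.
rewrite (eq_bigr (fun x => odd (a x) + (a x)./2.*2)) => [|x _]; last by rewrite odd_double_half.
rewrite big_split /= sum_double oddD odd_double addbF.
by rewrite -sum1dep_card [in RHS]big_mkcond; congr odd; apply: eq_bigr => x _; case: (odd _).
Qed.

Lemma even_pairs (T : finType) (E : rel T) : symmetric E -> irreflexive E ->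
  ~~ odd (\sum_x #|[set y | E x y]|).
Proof.
move=> Es Ei.
have e1 : \sum_x #|[set y | E x y]| = \sum_x \sum_(y | E x y) 1.
  by apply: eq_bigr => x _; rewrite sum1dep_card.
pose Q (x y : T) := (enum_rank x < enum_rank y)%N.
have e2 : \sum_x \sum_(y | E x y) 1 =
   \sum_x \sum_(y | E x y && Q x y) 1 + \sum_x \sum_(y | E x y && ~~ Q x y) 1.
  by rewrite -big_split /=; apply: eq_bigr => x _; rewrite (bigID (Q x)).
have e3 : \sum_x \sum_(y | E x y && ~~ Q x y) 1 = \sum_x \sum_(y | E x y && Q x y) 1.
  rewrite (exchange_big_dep predT) //=; apply: eq_bigr => x _; apply: eq_bigl => y.
  rewrite Es /Q -leqNgt leq_eqVlt.
  case: (eqVneq y x) => [->|ne]; first by rewrite Ei.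
  have -> : (enum_rank x == enum_rank y :> nat) = false.
    by apply/negbTE; rewrite (inj_eq val_inj) (inj_eq enum_rank_inj) eq_sym.
  by [].
by rewrite e1 e2 e3 addnn odd_double.
Qed.

End ParSec.

Section LH.
Variables (R : realFieldType) (m : nat) (M : 'M[R]_m).
Hypothesis Mpos : forall i j, 0 < M i j.
Variable l : 'I_m.

Local Notation C := 'I_(m + m).
Local Notation V := 'rV[R]_(1 + m).

Definition zc (i : 'I_m) : C := lshift m i.
Definition wc (i : 'I_m) : C := rshift m i.
Definition Am : 'M[R]_(m, m + m) := row_mx M 1%:M.
Definition Bm : 'M[R]_(m, 1 + m) := row_mx (const_mx 1) 1%:M.
Definition Km : 'M[R]_(1 + m, m) := col_mx 0 1%:M.

Lemma BmK : Bm *m Km = 1%:M.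
Proof. by rewrite /Bm /Km mul_row_col mulmx0 mul1mx add0r. Qed.

Definition feas (X : 'M[R]_(m + m, 1 + m)) :=
  Am *m X = Bm /\ forall c, lexnn (row c X).
Definition suppm p (Y : 'M[R]_(m + m, p)) : {set C} := [set c | row c Y != 0].
Definition vtx (S : {set C}) := #|S| = m /\ exists X, feas X /\ suppm X = S.

Lemma suppm0 p (Y : 'M[R]_(m + m, p)) c : c \notin suppm Y -> row c Y = 0.
Proof. by rewrite inE negbK => /eqP. Qed.

Definition Sel (S : {set C}) : 'M[R]_(m + m, #|S|) :=
  \matrix_(c, j) ((c == enum_val j)%:R).

Lemma sum_delta (F : C -> R) a : \sum_c ((c == a)%:R * F c) = F a.
Proof.
rewrite (bigD1 a) //= eqxx mul1r big1 ?addr0 // => c /negbTE ->.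
by rewrite mul0r.
Qed.

Lemma selK (S : {set C}) p (Y : 'M[R]_(m + m, p)) :
  (forall c, c \notin S -> row c Y = 0) -> Sel S *m ((Sel S)^T *m Y) = Y.
Proof.
move=> hY; apply/matrixP => c k; rewrite mxE.
under eq_bigr do rewrite !mxE.
under eq_bigr do under eq_bigr do rewrite !mxE.
under eq_bigr do rewrite sum_delta.
rewrite -(big_enum_val (fun x => (c == x)%:R * Y x k)).
have [cS|cS] := boolP (c \in S).
  rewrite (bigD1 c) //= eqxx mul1r big1 ?addr0 // => x /andP [_ /negbTE].
  by rewrite eq_sym => ->; rewrite mul0r.
rewrite big1; last by move=> x xS; rewrite (_ : (c == x) = false) ?mul0r //; apply/negbTE; apply: contraNneq cS => ->.
have := hY c cS => /rowP /(_ k); rewrite !mxE => ->.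
by rewrite ?mul0r.
Qed.

Lemma rankAS (S : {set C}) X : feas X -> (forall c, c \notin S -> row c X = 0) ->
  (m <= \rank (Am *m Sel S))%N.
Proof.
move=> [hA _] hX.
have e : Am *m Sel S *m ((Sel S)^T *m X *m Km) = 1%:M.
  have -> : Am *m Sel S *m ((Sel S)^T *m X *m Km) = Am *m (Sel S *m ((Sel S)^T *m X)) *m Km by rewrite !mulmxA.
  by rewrite selK // hA BmK.
by rewrite -[X in (X <= _)%N](mxrank1 R m) -e mxrankM_maxl.
Qed.

Lemma rank_bound X : feas X -> (m <= #|suppm X|)%N.
Proof.
move=> hX; apply: leq_trans (rankAS hX _) (rank_leq_col _).
by move=> c; apply: suppm0.
Qed.

Lemma kernel (S : {set C}) X p (Y : 'M[R]_(m + m, p)) : #|S| = m -> feas X ->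
  (forall c, c \notin S -> row c X = 0) ->
  (forall c, c \notin S -> row c Y = 0) -> Am *m Y = 0 -> Y = 0.
Proof.
move=> HS hX hXS hYS hAY.
set A' := Am *m Sel S.
have rk : \rank A' = #|S|.
  apply/eqP; rewrite eqn_leq rank_leq_col /=.
  by apply: leq_trans (rankAS hX hXS); rewrite HS.
have rf : row_free A'^T by rewrite /row_free mxrank_tr rk.
have : ((Sel S)^T *m Y)^T *m A'^T = 0 *m A'^T.
  by rewrite mul0mx -trmx_mul /A' -mulmxA selK // hAY trmx0.
move/(row_free_inj rf) => /(congr1 trmx); rewrite trmxK trmx0 => h.
by rewrite -(selK hYS) h mulmx0.
Qed.

Lemma row_cv_rv (d : 'cV[R]_(m + m)) (t : V) c : row c (d *m t) = d c 0 *: t.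
Proof. by apply/rowP => k; rewrite !mxE big_ord1. Qed.

Lemma row_add p (A B : 'M[R]_(m + m, p)) c : row c (A + B) = row c A + row c B.
Proof. by apply/rowP => k; rewrite !mxE. Qed.

Lemma row_sub p (A B : 'M[R]_(m + m, p)) c : row c (A - B) = row c A - row c B.
Proof. by apply/rowP => k; rewrite !mxE. Qed.

Lemma rowE0 p q (A : 'M[R]_(p, q)) c k : row c A = 0 -> A c k = 0.
Proof. by move/rowP/(_ k); rewrite !mxE. Qed.

Lemma entry_sub p q (A B : 'M[R]_(p, q)) c k : (A - B) c k = A c k - B c k.
Proof. by rewrite !mxE. Qed.

Lemma entry_add p q (A B : 'M[R]_(p, q)) c k : (A + B) c k = A c k + B c k.
Proof. by rewrite !mxE. Qed.

Lemma Am_z i j : Am i (lshift m j) = M i j.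
Proof. by rewrite /Am /zc row_mxEl. Qed.
Lemma Am_w i j : Am i (rshift m j) = (i == j)%:R.
Proof. by rewrite /Am /wc row_mxEr mxE. Qed.

Lemma bounded (d : 'cV[R]_(m + m)) : Am *m d = 0 -> (forall c, 0 <= d c 0) -> d = 0.
Proof.
move=> hA hd.
have H : forall i c, Am i c * d c 0 = 0.
  move=> i c; have hs : \sum_j Am i j * d j 0 = 0.
    by have := congr1 (fun A : 'cV[R]_m => A i 0) hA; rewrite mxE [RHS]mxE.
  apply: (psumr_eq0P _ hs) => // c' _; apply: mulr_ge0 (hd c').
  by case: (split_ordP c') => j ->; rewrite ?Am_z ?Am_w ?ler0n ?ltW.
apply/matrixP => c k; rewrite (ord1 k) mxE.
case: (split_ordP c) => j ->.
  have := H l (zc j); rewrite Am_z => /eqP; rewrite mulf_eq0 => /orP [|/eqP //].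
  by rewrite gt_eqF.
by have := H j (wc j); rewrite Am_w eqxx mul1r.
Qed.

Lemma neg_scale a (x s : V) : a < 0 -> (-a) *: ((-a)^-1 *: x - s) = x + a *: s.
Proof.
move=> a0; rewrite scalerBr scalerA mulfV ?scale1r ?oppr_eq0 ?lt_eqF //.
by rewrite scaleNr opprK.
Qed.

Lemma neg_scale_iff a (x s : V) : a < 0 ->
  lexnn (x + a *: s) <-> lexle s ((-a)^-1 *: x).
Proof.
move=> a0; rewrite /lexle -(neg_scale _ _ a0); split => h.
  have := lexZ (a := (-a)^-1) _ h; rewrite scalerA mulVf ?scale1r ?oppr_eq0 ?lt_eqF //.
  by apply; rewrite invr_ge0 oppr_ge0 ltW.
by apply: lexZ => //; rewrite oppr_ge0 ltW.
Qed.

Lemma dir_ex (S : {set C}) X c : feas X -> suppm X = S -> c \notin S ->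
  exists d : 'cV[R]_(m + m), [/\ Am *m d = 0, d c 0 = 1 &
     forall c', c' \notin c |: S -> d c' 0 = 0].
Proof.
move=> [hA hL] hs cS.
have Xz : forall c', c' \notin S -> row c' X = 0 by move=> c'; rewrite -hs; apply: suppm0.
set X2 := X *m Km.
have A2 : Am *m X2 = 1%:M by rewrite mulmxA hA BmK.
set e : 'cV[R]_(m + m) := delta_mx c 0.
exists (e - X2 *m (Am *m e)); split.
- have A2' : forall v : 'cV[R]_m, Am *m (X2 *m v) = v.
    by move=> v; rewrite mulmxA A2 mul1mx.
  by rewrite mulmxBr A2' subrr.
- have : row c (X2 *m (Am *m e)) = 0 by rewrite !row_mul Xz // !mul0mx.
  move/rowE0 => h.
  by rewrite entry_sub h /e mxE !eqxx subr0.
- move=> c'; rewrite !inE negb_or => /andP [cc' c'S].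
  have : row c' (X2 *m (Am *m e)) = 0 by rewrite !row_mul Xz // !mul0mx.
  move/rowE0 => h.
  by rewrite entry_sub h /e mxE (negbTE cc') subr0.
Qed.


Lemma pivot_ex (S : {set C}) c : vtx S -> c \notin S ->
  exists S', [/\ vtx S', S' != S & S' \subset c |: S].
Proof.
case=> HS [X [hX hs]] cS.
have [hA hL] := hX.
have Xz : forall c', c' \notin S -> row c' X = 0 by move=> c'; rewrite -hs; apply: suppm0.
have [d [Ad dc dout]] := dir_ex hX hs cS.
have [r0 hr0] : exists r, d r 0 < 0.
  case: (boolP [exists r, d r 0 < 0]) => [/existsP //|/existsPn hn].
  have d0 : d = 0 by apply: bounded => // c'; rewrite leNgt hn.
  by move: dc; rewrite d0 mxE => /eqP; rewrite eq_sym oner_eq0.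
set D := [set r | d r 0 < 0].
pose rho := fun r => (- d r 0)^-1 *: row r X.
have ne : enum D != [::].
  have : r0 \in enum D by rewrite mem_enum inE.
  by case: (enum D).
have [r rD hmin] := lex_min rho ne.
rewrite mem_enum inE in rD.
have hmin' : forall c', d c' 0 < 0 -> lexle (rho r) (rho c').
  by move=> c' h; apply: hmin; rewrite mem_enum inE.
set t := rho r.
have tnn : lexnn t by apply: lexZ (hL r); rewrite invr_ge0 oppr_ge0 ltW.
set X' := X + d *m t.
have rowX' : forall c', row c' X' = row c' X + d c' 0 *: t.
  by move=> c'; rewrite row_add row_cv_rv.
have hX' : feas X'.
  split; first by rewrite mulmxDr hA mulmxA Ad mul0mx addr0.
  move=> c'; rewrite rowX'; have [h|h] := ltP (d c' 0) 0.
    by apply/(neg_scale_iff _ _ h); apply: hmin'.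
  by apply: lexD (hL c') (lexZ h tnn).
have rX' : row r X' = 0.
  by rewrite rowX' /t /rho scalerA invrN mulrN mulfV ?lt_eqF // scaleN1r addrN.
have rS : r \in S.
  apply: contraT => rnS.
  have : r \notin c |: S.
    rewrite !inE negb_or rnS andbT; apply/eqP => e; move: rD; rewrite e dc.
    by rewrite ltr10.
  by move/dout; move: rD => /[swap] ->; rewrite ltxx.
have sub' : suppm X' \subset (c |: S) :\ r.
  apply/subsetP => c'; rewrite !inE => h.
  have [e|ne'] := eqVneq c' r; first by rewrite e rX' eqxx in h.
  rewrite /=; apply: contraTT h => hn.
  rewrite negbK rowX' Xz ?dout ?scale0r ?addr0 //; first by rewrite !inE.
  by move: hn; rewrite negb_or => /andP [].
have card' : #|suppm X'| = m.
  apply/eqP; rewrite eqn_leq rank_bound // andbT.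
  apply: leq_trans (subset_leq_card sub') _.
  move: (cardsD1 r (c |: S)); rewrite cardsU1 cS HS !inE rS orbT /=.
  by move=> /eqP; rewrite eqn_add2l => /eqP <-.
exists (suppm X'); split.
- by split => //; exists X'.
- apply/eqP => e.
  have : c \in suppm X'.
    rewrite inE rowX' dc scale1r Xz // add0r; apply/eqP => t0.
    move: rX'; rewrite rowX' t0 scaler0 addr0 => /eqP.
    by rewrite -hs inE in rS; rewrite (negbTE rS).
  by rewrite e (negbTE cS).
- exact: subset_trans sub' (subD1set _ _).
Qed.

Lemma pivot_repr (S : {set C}) X c (d : 'cV[R]_(m + m)) Y : #|S| = m -> feas X -> suppm X = S ->
  c \notin S -> Am *m d = 0 -> d c 0 = 1 ->
  (forall c', c' \notin c |: S -> d c' 0 = 0) -> feas Y ->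
  suppm Y \subset c |: S -> Y = X + d *m row c Y.
Proof.
move=> HS hX hs cS Ad dc dout [hAY hLY] sub.
have [hA hL] := hX.
have Xz : forall c', c' \notin S -> row c' X = 0 by move=> c'; rewrite -hs; apply: suppm0.
apply/eqP; rewrite -subr_eq0; apply/eqP.
apply: (kernel HS hX Xz).
- move=> c' c'S; rewrite row_sub row_add row_cv_rv Xz //.
  have [->|ne] := eqVneq c' c; first by rewrite dc scale1r add0r subrr.
  have c'n : c' \notin c |: S by rewrite !inE negb_or ne.
  rewrite dout // scale0r addr0 subr0 suppm0 //.
  by apply: contra c'n => h; apply: (subsetP sub).
- by rewrite mulmxBr mulmxDr hAY hA mulmxA Ad mul0mx addr0 subrr.
Qed.

Lemma pivot_val (S : {set C}) X c (d : 'cV[R]_(m + m)) Y : #|S| = m -> feas X -> suppm X = S ->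
  c \notin S -> Am *m d = 0 -> d c 0 = 1 ->
  (forall c', c' \notin c |: S -> d c' 0 = 0) -> feas Y ->
  suppm Y \subset c |: S -> #|suppm Y| = m -> suppm Y != S ->
  (exists r', d r' 0 < 0 /\ row c Y = (- d r' 0)^-1 *: row r' X) /\
  (forall c', d c' 0 < 0 -> lexle (row c Y) ((- d c' 0)^-1 *: row c' X)).
Proof.
move=> HS hX hs cS Ad dc dout hY sub cardY neY.
have eY := pivot_repr HS hX hs cS Ad dc dout hY sub.
have [hA hL] := hX; have [hAY hLY] := hY.
have rowY : forall c', row c' Y = row c' X + d c' 0 *: row c Y.
  by move=> c'; rewrite {1}eY row_add row_cv_rv.
split; last first.
  move=> c' h; apply/(neg_scale_iff _ _ h); rewrite -rowY; exact: hLY.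
have cY : c \in suppm Y.
  apply: contraT => cn.
  have subS : suppm Y \subset S.
    apply/subsetP => x xY; have := subsetP sub x xY; rewrite !inE => /orP [/eqP e|//].
    by move: cn; rewrite -e xY.
  move: neY; rewrite eqEcard subS HS cardY leqnn.
  done.
have [r' /andP [r'S r'Y]] : exists r', (r' \in S) && (r' \notin suppm Y).
  apply/existsP; apply: contraT; rewrite negb_exists => /forallP hn.
  have : c |: S \subset suppm Y.
    apply/subsetP => x /setU1P [->//|xS].
    by have := hn x; rewrite xS /= negbK.
  move/subset_leq_card; rewrite cardsU1 cS HS cardY.
  by rewrite add1n ltnn.
have hr : row r' X + d r' 0 *: row c Y = 0 by rewrite -rowY suppm0.
have Xr : row r' X != 0 by rewrite -hs inE in r'S.
have dneg : d r' 0 < 0.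
  rewrite ltNge; apply/negP => h.
  have : row r' X = 0.
    apply: lex_anti (hL r') _.
    have -> : - row r' X = d r' 0 *: row c Y by apply/eqP; rewrite eq_sym -addr_eq0 addrC hr.
    exact: lexZ h (hLY c).
  by move/eqP; rewrite (negbTE Xr).
exists r'; split => //.
have e1 : row r' X = (- d r' 0) *: row c Y by apply/eqP; rewrite scaleNr -addr_eq0 hr.
by rewrite e1 scalerA mulVf ?scale1r // oppr_eq0 lt_eqF.
Qed.

Lemma pivot_uniq (S S1 S2 : {set C}) c : vtx S -> c \notin S -> vtx S1 -> vtx S2 ->
  S1 != S -> S2 != S -> S1 \subset c |: S -> S2 \subset c |: S -> S1 = S2.
Proof.
case=> HS [X [hX hs]] cS [H1 [Y1 [hY1 e1]]] [H2 [Y2 [hY2 e2]]] n1 n2 s1 s2.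
have [d [Ad dc dout]] := dir_ex hX hs cS.
subst S1 S2.
have [[r1 [d1 v1]] m1] := pivot_val HS hX hs cS Ad dc dout hY1 s1 H1 n1.
have [[r2 [d2 v2]] m2] := pivot_val HS hX hs cS Ad dc dout hY2 s2 H2 n2.
have ev : row c Y1 = row c Y2.
  apply: lexle_anti; first by rewrite v2; apply: m1.
  by rewrite v1; apply: m2.
rewrite (pivot_repr HS hX hs cS Ad dc dout hY1 s1) (pivot_repr HS hX hs cS Ad dc dout hY2 s2).
by rewrite ev.
Qed.


Definition good (U : {set C}) : bool :=
  [forall i, (i != l) ==> ~~ ((zc i \in U) && (wc i \in U))].
Definition vtxb (S : {set C}) : bool := `[< vtx S >].
Definition Erel (S S' : {set C}) : bool :=
  [&& vtxb S, vtxb S', S != S', #|S :|: S'| == m.+1 & good (S :|: S')].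
Definition Gs (S : {set C}) := [set c | (c \notin S) && good (c |: S)].
Definition piv (S : {set C}) c :=
  odflt S [pick S' | vtxb S' && (S' != S) && (S' \subset c |: S)].

Lemma good_sub (U V : {set C}) : U \subset V -> good V -> good U.
Proof.
move=> sUV /forallP h; apply/forallP => i; apply/implyP => il.
have := implyP (h i) il; apply: contra => /andP [a b].
by rewrite !(subsetP sUV).
Qed.

Lemma piv_spec (S : {set C}) c : vtx S -> c \notin S ->
  [/\ vtx (piv S c), piv S c != S & piv S c \subset c |: S].
Proof.
move=> vS cS; rewrite /piv; case: pickP => [S' /andP [/andP [/asboolP v n] s]|h] //=.
have [S' [v n s]] := pivot_ex vS cS.
by move: (h S'); rewrite /vtxb n s (introT (asboolP _) v).
Qed.

Lemma c_in (S S' : {set C}) c : vtx S -> vtx S' -> S' != S -> S' \subset c |: S ->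
  c \in S' /\ S :|: S' = c |: S.
Proof.
case=> HS _ [HS' _] ne sub.
have cS' : c \in S'.
  apply: contraT => cn.
  have sS : S' \subset S.
    apply/subsetP => x xS'; have := subsetP sub x xS'; case/setU1P => [e|//].
    by move: cn; rewrite -e xS'.
  by move: ne; rewrite eqEcard sS HS HS' leqnn.
split => //; apply/eqP; rewrite eqEsubset; apply/andP; split.
  by rewrite subUset subsetUr sub.
by apply/subsetP => x /setU1P [->|xS]; rewrite inE ?cS' ?xS ?orbT.
Qed.

Lemma deg (S : {set C}) : vtx S -> #|[set S' | Erel S S']| = #|Gs S|.
Proof.
move=> vS.
have vSb : vtxb S by apply/asboolP.
have [HS _] := vS.
have -> : [set S' | Erel S S'] = piv S @: Gs S.
  apply/setP => S'; rewrite inE; apply/idP/idP.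
  - case/and5P => _ /asboolP vS' ne /eqP cU gU.
    have [HS' _] := vS'.
    have [c cS' cS] : exists2 c, c \in S' & c \notin S.
      case: (boolP [exists c, (c \in S') && (c \notin S)]) => [/existsP [c /andP [a b]]|/existsPn h].
        by exists c.
      have sS : S' \subset S.
        by apply/subsetP => x xS'; have := h x; rewrite xS' /= negbK.
      by move: ne; rewrite eq_sym eqEcard sS HS HS' leqnn.
    have eU : S :|: S' = c |: S.
      apply/eqP; rewrite eq_sym eqEcard cU cardsU1 cS HS leqnn andbT.
      by apply/subsetP => x /setU1P [->|xS]; rewrite inE ?cS' ?xS ?orbT.
    have sub : S' \subset c |: S by rewrite -eU subsetUr.
    apply/imsetP; exists c; first by rewrite inE cS -eU gU.
    have [vp np sp] := piv_spec vS cS.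
    by apply: (pivot_uniq vS cS vS' vp _ np sub sp); rewrite eq_sym.
  - case/imsetP => c; rewrite inE => /andP [cS gc] ->.
    have [vp np sp] := piv_spec vS cS.
    have [cp eU] := c_in vS vp np sp.
    apply/and5P; split => //.
    + by apply/asboolP.
    + by rewrite eq_sym.
    + by rewrite eU cardsU1 cS HS.
    + by rewrite eU.
apply: card_in_imset => c1 c2; rewrite !inE => /andP [c1S _] /andP [c2S _] e.
have [vp np sp] := piv_spec vS c1S.
have [cp _] := c_in vS vp np sp.
have [vp2 np2 sp2] := piv_spec vS c2S.
rewrite e in cp; have := subsetP sp2 c1 cp; case/setU1P => // h.
by rewrite h in c1S.
Qed.

Lemma goodz (S : {set C}) i : good S -> good (zc i |: S) = (i == l) || (wc i \notin S).
Proof.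
move=> /forallP gS; apply/forallP/idP.
- move=> h; have := h i; rewrite !in_setU1 eqxx /= /wc /zc eq_rlshift /=.
  by case: eqVneq.
- move=> hi j; apply/implyP => jl; rewrite !in_setU1 /zc /wc eq_rlshift (inj_eq (@lshift_inj _ _)) /=.
  case: (eqVneq j i) => [ji|nji] /=.
    by subst j; move: hi; rewrite (negbTE jl) /= => /negbTE ->; rewrite ?andbF ?andbT.
  exact: (implyP (gS j) jl).
Qed.

Lemma goodw (S : {set C}) i : good S -> good (wc i |: S) = (i == l) || (zc i \notin S).
Proof.
move=> /forallP gS; apply/forallP/idP.
- move=> h; have := h i; rewrite !in_setU1 eqxx /= /wc /zc eq_lrshift /= andbT.
  by case: eqVneq.
- move=> hi j; apply/implyP => jl; rewrite !in_setU1 /zc /wc eq_lrshift (inj_eq (@rshift_inj _ _)) /=.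
  case: (eqVneq j i) => [ji|nji] /=.
    by subst j; move: hi; rewrite (negbTE jl) /= => /negbTE ->.
  exact: (implyP (gS j) jl).
Qed.

Lemma odd_G (S : {set C}) : odd #|Gs S| = good S && ((zc l \in S) (+) (wc l \in S)).
Proof.
have [gS|ngS] := boolP (good S); last first.
  have -> : Gs S = set0.
    apply/setP => c; rewrite !inE; apply/negbTE; apply/negP => /andP [_ g].
    by apply: (negP ngS); apply: good_sub g; exact: subsetUr.
  by rewrite cards0.
have e1 : #|Gs S| = \sum_c ((c \in Gs S) : nat).
  by rewrite -sum1_card big_mkcond /=; apply: eq_bigr => c _; case: (_ \in _).
pose f i := ((zc i \in Gs S) + (wc i \in Gs S))%N.
have e2 : #|Gs S| = \sum_i f i by rewrite e1 big_split_ord /f big_split.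
have fi : forall i, i != l -> f i = ((zc i \notin S) && (wc i \notin S)).*2.
  move=> i il; rewrite /f !inE goodz // goodw // (negbTE il) /=.
  by case: (zc i \in S); case: (wc i \in S).
have fl : f l = ((zc l \notin S) + (wc l \notin S))%N.
  by rewrite /f !inE goodz // goodw // eqxx /= !andbT.
rewrite e2 (bigD1 l) //= (eq_bigr _ fi) -(big_morph double doubleD (id1 := 0%N) (id2 := 0%N)) //.
by rewrite oddD odd_double addbF fl oddD !oddb addbN addNb negbK.
Qed.

Definition S0 : {set C} := [set wc i | i : 'I_m].

Lemma vtx_S0 : vtx S0.
Proof.
split; first by rewrite card_imset //; [rewrite card_ord | exact: rshift_inj].
pose X0 : 'M[R]_(m + m, 1 + m) := col_mx 0 Bm.
have rB : forall i, row i Bm != 0.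
  move=> i; apply/negP => /eqP /rowP /(_ (lshift m 0)); rewrite mxE [RHS]mxE /Bm row_mxEl mxE.
  by move/eqP; rewrite oner_eq0.
exists X0; split; first split.
- by rewrite /Am /X0 mul_row_col mulmx0 mul1mx add0r.
- move=> c; case: (split_ordP c) => j ->.
    by rewrite rowKu row0 => k _; rewrite !mxE.
  rewrite rowKd; apply: (@lex_first _ _ _ (lshift m 0)) => //.
  by rewrite mxE /Bm row_mxEl mxE ltr01.
- apply/setP => c; rewrite inE; case: (split_ordP c) => j ->.
    rewrite rowKu row0 eqxx /=; apply/esym/negbTE; apply/imsetP => -[i _].
    by move/eqP; rewrite eq_lrshift.
  by rewrite rowKd rB; apply/esym/imsetP; exists j.
Qed.


Lemma lcp_main : exists z : 'cV[R]_m,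
  [/\ forall j, 0 <= z j 0, forall i, (M *m z) i 0 <= 1,
      forall j, 0 < z j 0 -> (M *m z) j 0 = 1 & exists j, 0 < z j 0].
Proof.
pose K := [set S | vtxb S && good S && ((zc l \in S) (+) (wc l \in S))].
have evK : ~~ odd #|K|.
  have sym : symmetric Erel.
    move=> S S'; rewrite /Erel setUC eq_sym.
    by case: (vtxb S); case: (vtxb S').
  have irr : irreflexive Erel by move=> S; rewrite /Erel eqxx /= !(andFb, andbF).
  have h := even_pairs sym irr.
  rewrite oddsum in h.
  suff -> : K = [set S | odd #|[set S' | Erel S S']|] by [].
  apply/setP => S; rewrite !inE; case: (boolP (vtxb S)) => v /=.
    by rewrite deg ?odd_G //; apply/asboolP.
  have -> : [set S' | Erel S S'] = set0.
    by apply/setP => S'; rewrite !inE /Erel (negbTE v).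
  by rewrite cards0.
have zS0 : forall i, zc i \notin S0.
  move=> i; apply/negP => /imsetP [j _] /eqP.
  by rewrite /zc /wc eq_lrshift.
have S0K : S0 \in K.
  rewrite inE (negbTE (zS0 l)) /=; apply/andP; split; [apply/andP; split|].
  - by apply/asboolP; exact: vtx_S0.
  - by apply/forallP => i; apply/implyP => _; rewrite (negbTE (zS0 i)).
  - by apply/imsetP; exists l.
have [S1 S1K ne] : exists2 S1, S1 \in K & S1 != S0.
  case: (boolP [exists S1, (S1 \in K) && (S1 != S0)]) => [/existsP [S1 /andP [a b]]|/existsPn h].
    by exists S1.
  have e : K = [set S0].
    apply/setP => S; rewrite in_set1; apply/idP/eqP => [SK|->//].
    by have := h S; rewrite SK /= negbK => /eqP.
  by move: evK; rewrite e cards1.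
move: S1K; rewrite inE => /andP [/andP [/asboolP [HS1 [X [[hA hL] hs]]] g1] x1].
have compl : forall i, ~~ ((zc i \in S1) && (wc i \in S1)).
  move=> i; have [->|il] := eqVneq i l.
    by move: x1; case: (zc l \in S1); case: (wc l \in S1).
  exact: (implyP (forallP g1 i) il).
have [i0 zi0] : exists i, zc i \in S1.
  case: (boolP [exists i, zc i \in S1]) => [/existsP //|/existsPn h].
  have sub : S1 \subset S0.
    apply/subsetP => c cS; case: (split_ordP c) => j e; subst c.
      by move: (h j); rewrite /zc cS.
    by apply/imsetP; exists j.
  by move: ne; rewrite eqEcard sub HS1 (vtx_S0).1 leqnn.
pose k0 : 'I_(1 + m) := lshift m 0.
pose z : 'cV[R]_m := \col_j X (zc j) k0.
pose w : 'cV[R]_m := \col_j X (wc j) k0.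
have eq : forall i, (M *m z) i 0 + w i 0 = 1.
  move=> i; have hB : Bm i k0 = 1 by rewrite /Bm /k0 row_mxEl mxE.
  have := congr1 (fun A : 'M[R]_(m, 1 + m) => A i k0) hA.
  rewrite /= hB => <-.
  rewrite [RHS]mxE big_split_ord /=; congr (_ + _).
    by rewrite mxE; apply: eq_bigr => j _; rewrite Am_z mxE.
  rewrite (bigD1 i) //= Am_w eqxx mul1r big1 ?addr0; first by rewrite mxE.
  by move=> j ji; rewrite Am_w eq_sym (negbTE ji) mul0r.
have zge : forall j, 0 <= z j 0.
  move=> j; have := @lex_ge0 _ _ (row (zc j) X) k0 erefl (hL _).
  by rewrite !mxE.
have wge : forall j, 0 <= w j 0.
  move=> j; have := @lex_ge0 _ _ (row (wc j) X) k0 erefl (hL _).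
  by rewrite !mxE.
have cmp : forall j, z j 0 = 0 \/ w j 0 = 0.
  move=> j; have := compl j; rewrite negb_and => /orP [h|h]; [left|right];
    rewrite mxE; apply: rowE0; apply: suppm0; by rewrite hs.
exists z; split.
- exact: zge.
- by move=> i; have := eq i; have := wge i; lra.
- move=> j zj; case: (cmp j) => h; first by move: zj; rewrite h ltxx.
  by have := eq j; rewrite h addr0.
- case: (boolP [exists j, 0 < z j 0]) => [/existsP //| /existsPn h].
  have z0 : z = 0.
    apply/matrixP => j k; rewrite (ord1 k) [RHS]mxE.
    by have := zge j; have := h j; rewrite -leNgt => a b; apply/eqP; rewrite eq_le a b.
  have w0 : w i0 0 = 0.
    have := compl i0; rewrite zi0 /= => wn.
    by rewrite mxE; apply: rowE0; apply: suppm0; rewrite hs.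
  by have := eq i0; rewrite w0 z0 mulmx0 mxE addr0 => /eqP; rewrite eq_sym oner_eq0.
Qed.

End LH.

Theorem lcp (R : realFieldType) (m : nat) (M : 'M[R]_m) :
  (forall i j, 0 < M i j) -> (0 < m)%N ->
  exists z : 'cV[R]_m,
  [/\ forall j, 0 <= z j 0, forall i, (M *m z) i 0 <= 1,
      forall j, 0 < z j 0 -> (M *m z) j 0 = 1 & exists j, 0 < z j 0].
Proof.
move=> Mp m0; exact: (lcp_main Mp (Ordinal m0)).
Qed.

Lemma le_sum_nonneg (R : realFieldType) (T : finType) (F : T -> R) a :
  (forall x, 0 <= F x) -> F a <= \sum_x F x.
Proof.
by move=> h; rewrite (bigD1 a) //= lerDl sumr_ge0.
Qed.

Lemma sym_nash (R : realFieldType) n (G : 'I_n -> 'I_n -> R) : (0 < n)%N ->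
  exists nu : 'I_n -> R, [/\ forall j, 0 <= nu j, \sum_j nu j = 1 &
    forall k, \sum_j G k j * nu j <= \sum_i nu i * \sum_j G i j * nu j].
Proof.
move=> n0.
pose c := 1 + \sum_i \sum_j `|G i j|.
pose M : 'M[R]_n := \matrix_(i, j) (G i j + c).
have Mp : forall i j, 0 < M i j.
  move=> i j; rewrite mxE /c.
  have h1 : `|G i j| <= \sum_i \sum_j `|G i j|.
    have := @le_sum_nonneg _ _ (fun j => `|G i j|) j (fun _ => normr_ge0 _).
    move=> /le_trans; apply.
    apply: (@le_sum_nonneg _ _ (fun i => \sum_j `|G i j|) i).
    by move=> x; apply: sumr_ge0 => k _; apply: normr_ge0.
  have h2 := ler_norm (- G i j); rewrite normrN in h2.
  lra.
have [z [zge Mz1 Mzc [j0 zj0]]] := lcp Mp n0.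
pose zf j := z j 0.
pose s := \sum_j zf j.
pose A k := \sum_j G k j * zf j.
have MzE : forall i, (M *m z) i 0 = A i + c * s.
  move=> i; rewrite mxE /A /s mulr_sumr -big_split /=; apply: eq_bigr => j _.
  by rewrite mxE /zf; lra.
have sp : 0 < s.
  by rewrite /s (bigD1 j0) //=; apply: ltr_pwDl => //; apply: sumr_ge0 => j _; exact: zge.
have Ak : forall k, A k <= 1 - c * s by move=> k; have := Mz1 k; rewrite MzE; lra.
have zA : \sum_i zf i * A i = s - c * s ^+ 2.
  have e : forall i, zf i * A i = zf i - c * s * zf i.
    move=> i; have [zp|] := ltP 0 (zf i).
      have := Mzc i zp; rewrite MzE => h.
      have -> : A i = 1 - c * s by lra.
      by rewrite mulrBr mulr1; lra.
    by rewrite le_eqVlt => /orP [/eqP ->|]; [rewrite !(mul0r, mulr0) subr0 | rewrite ltNge zge].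
  rewrite (eq_bigr _ (fun i _ => e i)) sumrB -mulr_sumr.
  by rewrite expr2 mulrA.
exists (fun j => zf j / s); split.
- by move=> j; apply: divr_ge0 => //; [exact: zge | exact: ltW].
- by rewrite -mulr_suml mulfV // gt_eqF.
- move=> k.
  have e1 : \sum_j G k j * (zf j / s) = A k / s.
    by rewrite /A mulr_suml; apply: eq_bigr => j _; rewrite mulrA.
  have e2 : \sum_i zf i / s * \sum_j G i j * (zf j / s) = (s - c * s ^+ 2) / (s * s).
    rewrite -zA mulr_suml; apply: eq_bigr => i _.
    have -> : \sum_j G i j * (zf j / s) = A i / s.
      by rewrite /A mulr_suml; apply: eq_bigr => j _; rewrite mulrA.
    by rewrite invfM; field; rewrite gt_eqF.
  rewrite e1 e2.
  have -> : (s - c * s ^+ 2) / (s * s) = (1 - c * s) / s by field; rewrite gt_eqF.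
  by rewrite ler_pM2r ?invr_gt0 // Ak.
Qed.

Section Game.
Variables (R : realType) (X : finType).

Definition affd (f : {ffun X -> R} -> R) :=
  forall (mu1 mu2 : {ffun X -> R}) (t : R),
    is_dist mu1 -> is_dist mu2 -> 0 <= t <= 1 ->
    f [ffun x => t * mu1 x + (1 - t) * mu2 x] = t * f mu1 + (1 - t) * f mu2.

Lemma mix_dist k (nu : 'I_k -> R) (mu : 'I_k -> {ffun X -> R}) :
  (forall j, 0 <= nu j) -> \sum_j nu j = 1 -> (forall j, is_dist (mu j)) ->
  is_dist [ffun x => \sum_j nu j * mu j x].
Proof.
move=> nn s1 hd; split.
  by move=> x; rewrite ffunE; apply: sumr_ge0 => j _; apply: mulr_ge0 => //; case: (hd j).
under eq_bigr do rewrite ffunE.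
rewrite exchange_big /= -s1; apply: eq_bigr => j _.
by rewrite -mulr_sumr; case: (hd j) => _ ->; rewrite mulr1.
Qed.

Lemma mix_affine (f : {ffun X -> R} -> R) : affd f ->
  forall k (nu : 'I_k -> R) (mu : 'I_k -> {ffun X -> R}),
  (forall j, 0 <= nu j) -> \sum_j nu j = 1 -> (forall j, is_dist (mu j)) ->
  f [ffun x => \sum_j nu j * mu j x] = \sum_j nu j * f (mu j).
Proof.
move=> hf; elim=> [|k IH] nu mu nn s1 hd.
  by move: s1; rewrite big_ord0 => /eqP; rewrite eq_sym oner_eq0.
rewrite big_ord_recl.
set t := nu ord0.
have rest : \sum_(i < k) nu (lift ord0 i) = 1 - t by rewrite -s1 big_ord_recl; rewrite /t; lra.
have t1 : t <= 1.
  have : 0 <= \sum_(i < k) nu (lift ord0 i) by apply: sumr_ge0.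
  by rewrite rest; lra.
have [te|tlt] := eqVneq t 1.
  have z : forall i, nu (lift ord0 i) = 0.
    move=> i; apply: (psumr_eq0P (P := predT) (F := fun i => nu (lift ord0 i))) => //.
    by rewrite rest te subrr.
  have -> : [ffun x => \sum_j nu j * mu j x] = mu ord0.
    apply/ffunP => x; rewrite ffunE big_ord_recl big1 ?addr0; last first.
      by move=> i _; rewrite z mul0r.
    by rewrite -/t te mul1r.
  by rewrite -/t te mul1r big1 ?addr0 // => i _; rewrite z mul0r.
have t1' : 0 < 1 - t by rewrite subr_gt0 lt_neqAle tlt t1.
pose nu' i := nu (lift ord0 i) / (1 - t).
pose mu' i := mu (lift ord0 i).
have nn' : forall j, 0 <= nu' j by move=> j; apply: divr_ge0 => //; apply: ltW.
have s1' : \sum_j nu' j = 1 by rewrite -mulr_suml rest mulfV // gt_eqF.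
have hd' : forall j, is_dist (mu' j) by move=> j; apply: hd.
have e : [ffun x => \sum_j nu j * mu j x] =
         [ffun x => t * mu ord0 x + (1 - t) * [ffun x => \sum_j nu' j * mu' j x] x].
  apply/ffunP => x; rewrite !ffunE big_ord_recl; congr (_ + _).
  rewrite mulr_sumr; apply: eq_bigr => j _; rewrite /nu' /mu'.
  by field; rewrite gt_eqF.
rewrite e hf ?IH //.
- congr (_ + _); rewrite mulr_sumr; apply: eq_bigr => j _; rewrite /nu' /mu'.
  by field; rewrite gt_eqF.
- exact: mix_dist.
- by rewrite /t (nn ord0) t1.
Qed.

End Game.

Theorem mainTheorem9 (R : realType) (X A : finType)
  (occ : policy R X A -> {ffun X -> R})
  (r : X -> A -> {ffun X -> R} -> R)
  (n : nat) (pol : 'I_n -> policy R X A) :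
  (forall pi, is_policy pi -> is_dist (occ pi)) ->
  (0 < n)%N ->
  (forall i, is_policy (pol i)) ->
  mu_diff_affine occ r ->
  (exists nu, restricted_nash occ r pol nu) /\
  (exists rho, restricted_ce occ r pol rho) /\
  (exists rho, restricted_cce occ r pol rho).
Proof.
move=> hocc n0 hpol haff.
pose i0 : 'I_n := Ordinal n0.
pose D k (mu : {ffun X -> R}) := J occ r (pol k) mu - J occ r (pol i0) mu.
have affD : forall k, affd (D k).
  move=> k mu1 mu2 t d1 d2 ht.
  have := haff (pol k) (pol i0) (hpol k) (hpol i0) mu1 mu2 t d1 d2 ht.
  by cbv zeta.
pose G k j := D k (occ (pol j)).
have [nu [nn s1 hn]] := sym_nash G n0.
pose nuf : {ffun 'I_n -> R} := [ffun j => nu j].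
have distnu : is_dist nuf.
  by split; [move=> j; rewrite ffunE | under eq_bigr do rewrite ffunE].
have Dmix : forall k, D k (mu_of occ pol nuf) = \sum_j nu j * G k j.
  move=> k; rewrite /mu_of.
  have -> : [ffun x => \sum_j nuf j * occ (pol j) x] =
            [ffun x => \sum_j nu j * occ (pol j) x].
    by apply/ffunP => x; rewrite !ffunE; apply: eq_bigr => j _; rewrite ffunE.
  rewrite (mix_affine (affD k) (mu := fun j => occ (pol j))) //.
  by move=> j; apply: hocc.
set mu := mu_of occ pol nuf.
have nash : forall k, J occ r (pol k) mu <= J_mix occ r pol nuf mu.
  move=> k.
  have h := hn k.
  have e1 : \sum_j G k j * nu j = D k mu by rewrite Dmix; apply: eq_bigr => j _; rewrite mulrC.
  have e2 : \sum_i nu i * \sum_j G i j * nu j = J_mix occ r pol nuf mu - J occ r (pol i0) mu.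
    rewrite /J_mix; under [in RHS]eq_bigr do rewrite ffunE.
    have -> : J occ r (pol i0) mu = \sum_i nu i * J occ r (pol i0) mu by rewrite -mulr_suml s1 mul1r.
    rewrite -sumrB; apply: eq_bigr => i _.
    have -> : \sum_j G i j * nu j = D i mu by rewrite Dmix; apply: eq_bigr => j _; rewrite mulrC.
    by rewrite /D mulrBr.
  move: h; rewrite e1 e2 /D; lra.
have rN : restricted_nash occ r pol nuf by split.
have fs : fs_dist [:: (1, nuf)].
  split; first by move=> p; rewrite inE => /eqP -> /=; split.
  by rewrite big_cons big_nil addr0.
split; first by exists nuf.
split.
- exists [:: (1, nuf)]; split => // i k.
  rewrite big_cons big_nil addr0 /= mul1r -/mu.
  have z : forall j, nuf j * (J_mix occ r pol nuf mu - J occ r (pol j) mu) = 0.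
    have s : \sum_j nuf j * (J_mix occ r pol nuf mu - J occ r (pol j) mu) = 0.
      rewrite /J_mix; under eq_bigr do rewrite mulrBr.
      rewrite sumrB -mulr_suml; case: distnu => _ ->; rewrite mul1r subrr //.
    move=> j; apply: (psumr_eq0P (P := predT) (F := fun j => nuf j * (J_mix occ r pol nuf mu - J occ r (pol j) mu))) => //.
    move=> x _; apply: mulr_ge0; first by case: distnu.
    by rewrite subr_ge0.
  have := z i; have := nash k; have : 0 <= nuf i by case: distnu.
  move=> a b c.
  have -> : nuf i * (J occ r (pol k) mu - J occ r (pol i) mu) =
            nuf i * (J occ r (pol k) mu - J_mix occ r pol nuf mu) + nuf i * (J_mix occ r pol nuf mu - J occ r (pol i) mu) by ring.
  rewrite c addr0; apply: mulr_ge0_le0 => //; lra.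
- exists [:: (1, nuf)]; split => // k.
  rewrite big_cons big_nil addr0 /= mul1r -/mu.
  by have := nash k; lra.
Qed.
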